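(* Let $\langle A,\preccurlyeq\rangle$ be a pre-ordered set, and consider the condition ( * ) for every $a\in A$ there is $b\in A$ with $b\prec a$. (i) If $\preccurlyeq$ satisfies ( * ), then $LO(A,\preccurlyeq)$ contains no minimal sets; consequently every $pr(a)$, $a\in A$, is infinite, and every set in $LO(A,\preccurlyeq)$ is infinite. (ii) Conversely, if ( * ) fails, then $LO(A,\preccurlyeq)$ contains a minimal set.
   Context: A pre-ordering $\preccurlyeq$ on $A$ is a reflexive and transitive binary relation; $b\prec a$ means $b\preccurlyeq a$ and not $a\preccurlyeq b$. For $a\in A$, $pr(a)=\{b\in A: b\preccurlyeq a\}$. $LO(A,\preccurlyeq)$ is the set of all nonempty subsets $x\subseteq A$ such that $pr(c)\subseteq x$ for every $c\in x$. A set $x\in LO(A,\preccurlyeq)$ is minimal if there is no $y\in LO(A,\preccurlyeq)$ with $y\subsetneq x$. *)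

(* Defs.v *)
From mathcomp Require Import all_boot.
From mathcomp Require Import boolp classical_sets cardinality.
Set Implicit Arguments. Unset Strict Implicit. Unset Printing Implicit Defensive.
Local Open Scope classical_set_scope.

Section PreOrder.
Variables (A : Type) (le : A -> A -> Prop).

Definition is_preorder : Prop :=
  (forall a, le a a) /\ (forall a b c, le a b -> le b c -> le a c).

Definition slt (b a : A) : Prop := le b a /\ ~ le a b.

Definition pr (a : A) : set A := [set b | le b a].

Definition LO (x : set A) : Prop :=
  x !=set0 /\ (forall c, x c -> pr c `<=` x).

Definition LO_minimal (x : set A) : Prop :=
  LO x /\ ~ (exists y, LO y /\ y `<` x).

End PreOrder.

(* Main.v *)
Require Import Defs.
From mathcomp Require Import all_boot.
From mathcomp Require Import boolp classical_sets functions cardinality.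
Local Open Scope classical_set_scope.

Lemma pr_LO (A : Type) (le : A -> A -> Prop) :
  is_preorder le -> forall a, LO le (pr le a).
Proof.
move=> [refl tr] a; split; first by exists a; exact: refl.
by move=> c hc b hb; exact: tr hb hc.
Qed.

Theorem proposition2p4 (A : Type) (le : A -> A -> Prop) :
  is_preorder le ->
  ((forall a, exists b, slt le b a) ->
     (forall x : set A, ~ LO_minimal le x) /\
     (forall a : A, infinite_set (pr le a)) /\
     (forall x : set A, LO le x -> infinite_set x)) /\
  (~ (forall a, exists b, slt le b a) -> exists x : set A, LO_minimal le x).
Proof.
move=> hp; have [refl tr] := hp; split.
  move=> H.
  have Hinf : forall x : set A, LO le x -> infinite_set x.
    move=> x [[c xc] cl].
    have [f hf] := choice H.
    pose g n := iter n f c.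
    have gx : forall n, x (g n).
      elim=> [|n IH] //=; apply: (cl _ IH); exact: (hf _).1.
    have gle : forall n k, le (g (n + k)) (g n).
      move=> n; elim=> [|k IH]; first by rewrite addn0; exact: refl.
      rewrite addnS /=; apply: tr IH; exact: (hf _).1.
    have gslt : forall n k, ~ le (g n) (g (n + k.+1)).
      move=> n k h; apply: (hf (g (n + k))).2.
      apply: tr (gle n k) _; by rewrite addnS in h.
    have ginj : set_inj [set: nat] g.
      move=> m n _ _ e; apply/eqP; rewrite eqn_leq; apply/andP; split;
        rewrite leqNgt; apply/negP => hlt.
      - have := gslt n (m - n.+1); rewrite addnS -addSn subnKC // => h; apply: h.
        rewrite e; exact: refl.
      - have := gslt m (n - m.+1); rewrite addnS -addSn subnKC // => h; apply: h.
        rewrite e; exact: refl.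
    apply/infiniteP.
    have [h] := iffRL (@injfunPex _ _ [set: nat] x) (ex_intro2 _ _ g (fun n _ => gx n) ginj).
    exact: inj_card_le h.
  split; last split => //; last by move=> a; apply: Hinf; exact: pr_LO.
  move=> x [[[c xc] cl] nomin]; apply: nomin.
  have [b [hbc hcb]] := H c.
  exists (pr le b); split; first exact: pr_LO.
  split; first by move=> d hd; apply: (cl _ xc); exact: tr hd hbc.
  by move=> sub; apply: hcb; exact: sub _ xc.
move=> nH.
have [a ha] : exists a, forall b, le b a -> le a b.
  apply: contra_notP nH => nex a.
  have [b hb] : exists b, ~ (le b a -> le a b).
    apply: contra_notP nex => h; exists a => b; apply: (contra_notP _ h) => hn; by exists b.
  exists b; split; first by apply: contra_notP hb => h ? ; exfalso; apply: h.
  by move=> h; apply: hb.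
exists (pr le a); split; first exact: pr_LO.
move=> [y [[[d yd] cly] [sub nsub]]]; apply: nsub => e he.
have hd : le d a := sub _ yd.
apply: (cly _ yd); exact: tr he (ha _ hd).
Qed.
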